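(* Let $G\subset\operatorname{SL}(n,\mathbb{k})$ be a finite abelian subgroup and let $\mathscr{E}=(E_\rho:\rho\in G^* )$ be the collection of modules of semi-invariants on $X=\mathbb{A}^n_{\mathbb{k}}/G$. Then the toric algebra $A_{\mathscr{E}}$ is consistent, i.e. $J_W=J_{\mathscr{E}}$.
   Context: $\mathbb{k}$ is an algebraically closed field whose characteristic does not divide $|G|$; $G$ is taken to consist of diagonal matrices, and $\rho_i\in G^*=\operatorname{Hom}(G,\mathbb{k}^\times)$ is the $i$-th diagonal entry. $G$ acts on $\mathbb{k}[x_1,\dots,x_n]$ with $x_i$ of weight $\rho_i$; $R=\mathbb{k}[x_1,\dots,x_n]^G$, $X=\operatorname{Spec}R$ (a Gorenstein affine toric variety with Cox ring $\mathbb{k}[x_1,\dots,x_n]$ and $\operatorname{Cl}(X)\cong G^*$), and $E_\rho$ is the $R$-module spanned by semi-invariant polynomials of weight $\rho$ ($E_{1}=R$). The quiver of sections of $\mathscr{E}$ is the McKay quiver $Q$: vertices $G^*$ and arrows $a_i^\rho:\rho\to\rho\rho_i$ with label monomial $x_i$, for $\rho\in G^*$, $1\le i\le n$ (paths composed right to left; the label of a path is the product of labels of its arrows). $J_{\mathscr{E}}$ is the two-sided ideal of $\mathbb{k}Q$ generated by $p^+-p^-$ for all pairs of paths with equal head, tail and label monomial; it is generated by $a_i^{\rho\rho_j}a_j^\rho-a_j^{\rho\rho_i}a_i^\rho$. A cycle is anticanonical if its label is $x_1x_2\cdots x_n$. For a path $q$, $\partial_qW$ is the sum of all paths $p$ with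 $pq$ an anticanonical cycle; $\mathscr{P}$ is the set of paths $q$ with $\partial_qW$ a sum of precisely two paths sharing neither initial nor final arrow; $J_W$ is generated by $p^+-p^-$ whenever $\partial_qW=p^++p^-$ with $q\in\mathscr{P}$. Consistency means $J_W=J_{\mathscr{E}}$. *)

(* Defs.v *)
From HB Require Import structures.
From mathcomp Require Import all_boot all_order all_algebra all_fingroup.
Set Implicit Arguments. Unset Strict Implicit. Unset Printing Implicit Defensive.
Import GRing.Theory.
Local Open Scope ring_scope.

(* The finite abelian group G is given abstractly as a finGroupType gT together
   with its n diagonal characters rho_i : gT -> k; the embedding
   g |-> diag(rho_1 g, ..., rho_n g) identifies gT with G. *)

Section McKay.
Variables (k : closedFieldType) (n : nat) (gT : finGroupType).
Variable rho : 'I_n -> gT -> k.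

Definition is_char (chi : gT -> k) : Prop :=
  (forall g h : gT, chi (g * h)%g = chi g * chi h) /\ chi 1%g = 1.

(* A mpath of the McKay quiver: its tail vertex (a character) and the sequence
   of arrow indices in traversal order; the arrow a_i^chi : chi -> chi rho_i. *)
Definition mpath : Type := ({ffun gT -> k} * seq 'I_n)%type.

Definition is_path (p : mpath) : Prop := is_char p.1.

Definition ptail (p : mpath) : {ffun gT -> k} := p.1.

Definition phead (p : mpath) : {ffun gT -> k} :=
  [ffun g => p.1 g * \prod_(i <- p.2) rho i g].

(* Composition a b = "a after b" (right-to-left), None if not composable. *)
Definition pcomp (a b : mpath) : option mpath :=
  if phead b == ptail a then Some (b.1, b.2 ++ a.2) else None.

(* Same label monomial <=> same multiset of arrow indices. *)
Definition same_label (p q : mpath) : bool := perm_eq p.2 q.2.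

(* Elements of the mpath algebra kQ are finitely supported coefficient
   functions mpath -> k. The two-sided ideal generated by {p - q | R p q}
   consists of the finite sums  sum_j c_j * u_j (p_j - q_j) v_j  with u_j, v_j
   paths of Q (the paths span kQ). *)
Definition term_val (t : k * mpath * (mpath * mpath) * mpath) (x : mpath) : k :=
  let: (c, u, (p, q), v) := t in
  c * ((match pcomp p v with Some pv => pcomp u pv == Some x | None => false end)%:R
     - (match pcomp q v with Some qv => pcomp u qv == Some x | None => false end)%:R).

Definition in_ideal (R : mpath -> mpath -> Prop) (f : mpath -> k) : Prop :=
  exists s : seq (k * mpath * (mpath * mpath) * mpath),
    (forall t, t \in s -> let: (c, u, (p, q), v) := t in
                          [/\ is_path u, is_path v & R p q]) /\
    (forall x, f x = \sum_(t <- s) term_val t x).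

Definition RE (p q : mpath) : Prop :=
  [/\ is_path p, is_path q, ptail p = ptail q, phead p = phead q
    & same_label p q].

Definition anticanonical_cycle (c : mpath) : Prop :=
  is_path c /\ phead c = ptail c /\ perm_eq c.2 (enum 'I_n).

(* p is a summand of \partial_q W: p q is an anticanonical cycle. *)
Definition dW (q p : mpath) : Prop :=
  exists c, pcomp p q = Some c /\ anticanonical_cycle c.

(* Generators of J_W: \partial_q W = p+ + p- with q in the set P, i.e. exactly
   two such paths, sharing neither initial nor final arrow. *)
Definition RW (pp pm : mpath) : Prop :=
  exists q : mpath,
    [/\ is_path q,
        (forall p, dW q p <-> p = pp \/ p = pm),
        pp <> pm,
        ohead pp.2 != ohead pm.2
      & ohead (rev pp.2) != ohead (rev pm.2)].

End McKay.

(* Main.v *)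
Require Import Defs.
From HB Require Import structures.
From mathcomp Require Import all_boot all_order all_algebra all_fingroup.
Import GRing.Theory.
Local Open Scope ring_scope.

Section Aux.
Variables (k : closedFieldType) (n : nat) (gT : finGroupType).
Variable rho : 'I_n -> gT -> k.
Hypothesis rho_char : forall i, is_char (rho i).
Hypothesis rho_prod : forall g : gT, \prod_(i < n) rho i g = 1.

Local Notation mp := (mpath k n gT).

Lemma phead_cat (c : {ffun gT -> k}) s t :
  phead rho (phead rho (c, s), t) = phead rho (c, s ++ t).
Proof. by apply/ffunP => g; rewrite !ffunE /= big_cat mulrA. Qed.

Lemma phead_perm (c : {ffun gT -> k}) s t : perm_eq s t ->
  phead rho (c, s) = phead rho (c, t).
Proof. by move=> st; apply/ffunP => g; rewrite !ffunE /= (perm_big _ st). Qed.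

Lemma phead_full (c : {ffun gT -> k}) s : perm_eq s (enum 'I_n) ->
  phead rho (c, s) = c.
Proof.
move=> st; apply/ffunP => g; rewrite !ffunE /= (perm_big _ st).
by rewrite big_enum /= rho_prod mulr1.
Qed.

Lemma char_phead (c : {ffun gT -> k}) s : is_char c -> is_char (phead rho (c, s)).
Proof.
case=> cM c1; split.
  move=> g h; rewrite !ffunE /= cM.
  rewrite (eq_bigr (fun i => rho i g * rho i h)); last by move=> i _; case: (rho_char i).
  rewrite big_split /=; rewrite -!mulrA; congr (_ * _); rewrite mulrCA; done.
rewrite ffunE /= c1 mul1r big1_seq // => i _; by case: (rho_char i).
Qed.

Lemma RW_RE p q : RW rho p q -> RE rho p q.
Proof.
case=> q0 [pq0 dWq _ _ _].
have [[c [hc ac]] [c' [hc' ac']]] : dW rho q0 p /\ dW rho q0 q.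
  by split; apply/dWq; [left|right].
clear dWq.
case: ac => _ [_ ac]; case: ac' => _ [_ ac'].
move: hc hc' ac ac'; unfold Defs.pcomp.
case: (phead rho q0 =P ptail p) => // hp [<-]; case: (phead rho q0 =P ptail q) => // hq [<-] /= ac ac'.
have lab : perm_eq p.2 q.2 by rewrite -(perm_cat2l q0.2) (perm_trans ac) // perm_sym.
clear ac ac'.
rewrite /ptail in hp hq.
case: p hp lab => a b /= <- lab; case: q hq lab => a' b' /= <- lab.
split => //; rewrite /is_path /=; try exact: char_phead.
exact: phead_perm.
Qed.

Section Ideal.
Variable R : mp -> mp -> Prop.

Lemma in_ideal_ext {f g} : (forall x, f x = g x) -> in_ideal rho R f -> in_ideal rho R g.
Proof. by move=> fg [s [Hs Hf]]; exists s; split => // x; rewrite -fg. Qed.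

Lemma in_ideal0 : in_ideal rho R (fun _ => 0).
Proof. by exists [::]; split => // x; rewrite big_nil. Qed.

Lemma in_idealD {f g} : in_ideal rho R f -> in_ideal rho R g ->
  in_ideal rho R (fun x => f x + g x).
Proof.
move=> [s [Hs Hf]] [t [Ht Hg]]; exists (s ++ t); split.
  by move=> u; rewrite mem_cat => /orP[/Hs|/Ht].
by move=> x; rewrite big_cat Hf Hg.
Qed.

Lemma in_idealZ c f : in_ideal rho R f -> in_ideal rho R (fun x => c * f x).
Proof.
move=> [s [Hs Hf]].
exists (map (fun t : k * mp * (mp * mp) * mp =>
   let: (c0, u, pq, v) := t in (c * c0, u, pq, v)) s); split.
  move=> t /mapP [[[[c0 u] [p q]] v] /Hs H ->]; exact: H.
move=> x; rewrite Hf big_map mulr_sumr; apply: eq_bigr => -[[[c0 u] [p q]] v] _.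
by rewrite /term_val mulrA.
Qed.

Lemma in_ideal_sum (l : seq (k * mp * (mp * mp) * mp)) :
  (forall t, t \in l -> in_ideal rho R (term_val rho t)) ->
  in_ideal rho R (fun x => \sum_(t <- l) term_val rho t x).
Proof.
elim: l => [|t l IH] H.
  by apply: in_ideal_ext in_ideal0 => x; rewrite big_nil.
apply: in_ideal_ext (in_idealD (H t (mem_head _ _)) (IH _)).
  by move=> x; rewrite big_cons.
by move=> u ul; apply: H; rewrite inE ul orbT.
Qed.
End Ideal.
Arguments in_ideal_ext {R f g}.
Arguments in_idealD {R f g}.
Arguments in_idealZ {R} c {f}.
Arguments in_ideal_sum {R l}.

Definition Dfun (chi : {ffun gT -> k}) (s t : seq 'I_n) (x : mp) : k :=
  ((chi, s) == x)%:R - ((chi, t) == x)%:R.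

Local Notation J := (in_ideal rho (RW rho)).

Lemma perm2 (s : seq 'I_n) i j : perm_eq s [:: i; j] ->
  s = [:: i; j] \/ s = [:: j; i].
Proof.
move=> st; have := perm_size st.
case: s st => [|a [|b [|]]] //= st _.
have : a \in [:: i; j] by rewrite -(perm_mem st) mem_head.
rewrite !inE => /orP[/eqP ea|/eqP ea]; subst a.
  by left; move: st; rewrite perm_cons => /perm_small_eq ->.
right; have st' : perm_eq [:: j; b] [:: j; i].
  by apply: (perm_trans st); rewrite (perm_catC [:: i] [:: j]).
by move: st'; rewrite perm_cons => /perm_small_eq ->.
Qed.

Lemma RW_swap (h : {ffun gT -> k}) i j : is_char h -> i != j ->
  RW rho (h, [:: j; i]) (h, [:: i; j]).
Proof.
move=> hc ij.
set r0 := [seq l <- enum 'I_n | (l != i) && (l != j)].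
have pr : perm_eq ([:: i; j] ++ r0) (enum 'I_n).
  apply: uniq_perm; last 2 first.
  - by rewrite enum_uniq.
  - move=> x; rewrite mem_enum /= !inE mem_filter mem_enum andbT.
    by case: (x == i); case: (x == j).
  rewrite /= !inE (negbTE ij) /= /r0 !mem_filter !eqxx andbF /=.
  by rewrite filter_uniq // enum_uniq.
set q1 := phead rho (h, [:: i; j]).
have hq0 : phead rho (q1, r0) = h by rewrite phead_cat phead_full.
exists (q1, r0); split => //.
- exact: char_phead.
- move=> p; split.
  + case=> c [hc' [_ [_ ac]]]; move: hc' ac; rewrite /Defs.pcomp hq0.
    case: (h =P ptail p) => // ep [<-] /= ac.
    rewrite /ptail in ep.
    have : perm_eq p.2 [:: i; j].
      rewrite -(perm_cat2l r0); apply: (perm_trans ac).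
      by rewrite perm_sym perm_catC.
    clear ac; case: p ep => a b /= <- /perm2 [] ->; [right|left] => //.
  + move=> pe; exists (q1, r0 ++ p.2).
    have hpt : p.1 = h by case: pe => ->.
    have hp2 : perm_eq p.2 [:: i; j].
      case: pe => -> //=; by rewrite (perm_catC [:: j] [:: i]).
    have pr' : perm_eq (r0 ++ p.2) (enum 'I_n).
      apply: perm_trans pr; rewrite perm_catC perm_cat2r //.
    rewrite /Defs.pcomp hq0 /ptail hpt eqxx; split => //.
    split; first exact: char_phead.
    by split => //; rewrite phead_full.
- by case=> /eqP; rewrite eq_sym (negbTE ij).
- by rewrite /= eq_sym.
Qed.

Lemma D_swap (chi : {ffun gT -> k}) w i j r : is_char chi ->
  J (Dfun chi (w ++ j :: i :: r) (w ++ i :: j :: r)).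
Proof.
move=> cc; have [<-|ij] := eqVneq i j.
  by apply: in_ideal_ext (in_ideal0 _) => x; rewrite /Dfun subrr.
set v : mp := (chi, w); set h := phead rho v.
set pp : mp := (h, [:: j; i]); set pm : mp := (h, [:: i; j]).
set u : mp := (phead rho (chi, w ++ [:: j; i]), r).
exists [:: (1, u, (pp, pm), v)]; split.
  move=> t; rewrite inE => /eqP ->; split.
  - exact: char_phead.
  - exact: cc.
  - by apply: RW_swap => //; exact: char_phead.
move=> x; rewrite big_seq1 /term_val /Defs.pcomp /ptail /= eqxx /= eqxx /=.
have -> : phead rho (chi, w ++ [:: i; j]) == phead rho (chi, w ++ [:: j; i]).
  apply/eqP/phead_perm; rewrite perm_cat2l (perm_catC [:: i] [:: j]) //.
by rewrite mul1r /Dfun -!catA.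
Qed.

Lemma Dfun_add (chi : {ffun gT -> k}) (s t u : seq 'I_n) x : Dfun chi s t x + Dfun chi t u x = Dfun chi s u x.
Proof. by rewrite /Dfun addrA subrK. Qed.

Lemma D_trans (chi : {ffun gT -> k}) (s t u : seq 'I_n) : J (Dfun chi s t) -> J (Dfun chi t u) -> J (Dfun chi s u).
Proof. by move=> H1 H2; apply: in_ideal_ext (in_idealD H1 H2) => x; rewrite Dfun_add. Qed.

Lemma D_move (chi : {ffun gT -> k}) (t2 : seq 'I_n) (a : 'I_n) : is_char chi -> forall t1 w : seq 'I_n,
  J (Dfun chi (w ++ a :: t1 ++ t2) (w ++ t1 ++ a :: t2)).
Proof.
move=> cc; elim=> [|b t1 IH] w.
  by apply: in_ideal_ext (in_ideal0 _) => x; rewrite /Dfun subrr.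
apply: (D_trans chi _ (w ++ b :: a :: t1 ++ t2)); first exact: D_swap.
by have := IH (rcons w b); rewrite -!cats1 -!catA.
Qed.

Lemma D_perm (chi : {ffun gT -> k}) : is_char chi -> forall s t w : seq 'I_n, perm_eq s t ->
  J (Dfun chi (w ++ s) (w ++ t)).
Proof.
move=> cc; elim=> [|a s IH] t w st.
  have : size t = 0 by rewrite -(perm_size st).
  move/size0nil ->.
  by apply: in_ideal_ext (in_ideal0 _) => x; rewrite /Dfun subrr.
have at_ : a \in t by rewrite -(perm_mem st) mem_head.
move: st; case/splitPr: at_ => t1 t2 st.
have st' : perm_eq s (t1 ++ t2).
  by rewrite -(perm_cons a); apply: (perm_trans st); rewrite (perm_catCA t1 [:: a] t2).
apply: (D_trans chi _ (w ++ a :: t1 ++ t2)); last exact: D_move.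
by have := IH _ (rcons w a) st'; rewrite -!cats1 -!catA.
Qed.

Lemma RE_term_in t : (let: (c, u, (p, q), v) := t in
    [/\ is_path u, is_path v & RE rho p q]) -> J (term_val rho t).
Proof.
case: t => [[[c u] [p q]] v] [pu pv [pp pq tpq hpq lpq]].
rewrite /term_val /Defs.pcomp -tpq.
case: eqP => _; last first.
  by apply: in_ideal_ext (in_ideal0 _) => x; rewrite subrr mulr0.
have -> : phead rho (v.1, v.2 ++ q.2) = phead rho (v.1, v.2 ++ p.2).
  by apply: phead_perm; rewrite perm_cat2l perm_sym.
case: eqP => _; last first.
  by apply: in_ideal_ext (in_ideal0 _) => x; rewrite subrr mulr0.
apply: in_ideal_ext (in_idealZ c (D_perm v.1 pv (p.2 ++ u.2) (q.2 ++ u.2) v.2 _)).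
  by move=> x; rewrite /Dfun /= -!catA.
by rewrite perm_cat2r.
Qed.

End Aux.

Theorem proposition4p2 (k : closedFieldType) (n : nat) (gT : finGroupType)
    (rho : 'I_n -> gT -> k) :
  abelian [set: gT] ->
  (#|gT|%:R : k) != 0 ->
  (forall i, is_char (rho i)) ->
  (forall g : gT, \prod_(i < n) rho i g = 1) ->
  (forall g : gT, (forall i, rho i g = 1) -> g = 1%g) ->
  forall f : mpath k n gT -> k,
    in_ideal rho (RW rho) f <-> in_ideal rho (RE rho) f.
Proof.
move=> _ _ rc rp _ f; split.
  case=> s [Hs Hf]; exists s; split => // -[[[c u] [p q]] v] /Hs [? ? ?].
  by split => //; apply: (RW_RE _ _ _ _ rc).
case=> s [Hs Hf].
have H : in_ideal rho (RW rho) (fun x => \sum_(t <- s) term_val rho t x).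
  by apply: in_ideal_sum => t /Hs; apply: (RE_term_in _ _ _ _ rc rp).
by apply: (in_ideal_ext _ _ _ _ _ _ H) => x; rewrite Hf.
Qed.
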